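(* Let $A$ be a finitely generated $K$-algebra with a filtration $\mathcal{F}=\{V_n\}_{n\ge0}$. Fix an integer $k\ge1$ and let $\mathcal{G}=\{W_n\}_{n\ge0}$ be the filtration $W_n:=V_{nk}$. Then $\mathrm{h}_{\mathrm{alg}}(A,\mathcal{G})=k\cdot\mathrm{h}_{\mathrm{alg}}(A,\mathcal{F})$.
   Context: A filtration of a $K$-algebra $A$ is a family $\{V_n\}_{n\ge0}$ of subspaces with $0=V_0\subseteq V_1\subseteq\cdots$, $A=\bigcup_nV_n$ and $V_nV_m\subseteq V_{n+m}$; the quotients $V_n/V_{n-1}$ are assumed finite-dimensional. The algebraic entropy is $\mathrm{h}_{\mathrm{alg}}(A,\mathcal{F})=0$ if $A$ is finite-dimensional and otherwise $\limsup_{n\to\infty}\frac{\log\dim(V_n/V_{n-1})}{n}$ (with $\log0=-\infty$). *)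

(* Defs.v *)
From mathcomp Require Import all_boot all_order all_algebra.
From mathcomp Require Import all_classical all_reals all_analysis.
Set Implicit Arguments. Unset Strict Implicit. Unset Printing Implicit Defensive.
Import Order.TTheory GRing.Theory Num.Theory.
Local Open Scope classical_set_scope.
Local Open Scope ring_scope.

Section Filtrations.
Variables (K : fieldType) (A : algType K).

Definition is_subspace (S : set A) : Prop :=
  S 0 /\ (forall x y, S x -> S y -> S (x + y)) /\ (forall (c : K) x, S x -> S (c *: x)).

Definition fin_dim : Prop :=
  exists (d : nat) (b : 'I_d -> A), forall x : A,
    exists c : 'I_d -> K, x = \sum_(i < d) c i *: b i.

Definition fin_gen : Prop :=
  exists (s : seq A), forall S : set A,
    S 1 -> (forall x y, S x -> S y -> S (x + y)) ->
    (forall (c : K) x, S x -> S (c *: x)) ->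
    (forall x y, S x -> S y -> S (x * y)) ->
    (forall x, x \in s -> S x) -> S = setT.

(* b_0,...,b_{d-1} in V induce a basis of the quotient space V/W (W <= V). *)
Definition quot_basis (V W : set A) (d : nat) (b : 'I_d -> A) : Prop :=
  (forall i, V (b i)) /\
  (forall x, V x -> exists (c : 'I_d -> K) (w : A), W w /\ x = \sum_(i < d) c i *: b i + w) /\
  (forall c : 'I_d -> K, W (\sum_(i < d) c i *: b i) -> forall i, c i = 0).

Definition fin_quot (V W : set A) : Prop := exists d b, @quot_basis V W d b.

(* dim_K (V/W): the size of a basis of V/W (0 by convention if infinite) *)
Definition qdim (V W : set A) : nat := xget 0%N [set d | exists b, @quot_basis V W d b].

(* A filtration {V_n}_{n>=0} of A. The condition V_n V_m <= V_(n+m) is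
   written elementwise (equivalent since V_(n+m) is a subspace). *)
Definition filtration (V : nat -> set A) : Prop :=
  V 0%N = [set 0] /\
  (forall n, is_subspace (V n)) /\
  (forall n, V n `<=` V n.+1) /\
  (forall x, exists n, V n x) /\
  (forall n m x y, V n x -> V m y -> V (n + m)%N (x * y)) /\
  (forall n, (0 < n)%N -> fin_quot (V n) (V n.-1)).

(* algebraic entropy; log = natural logarithm, log 0 = -oo *)
Definition halg_term (R : realType) (V : nat -> set A) (n : nat) : \bar R :=
  let d := qdim (V n) (V n.-1) in
  if d == 0%N then -oo%E else ((ln (d%:R : R)) / n%:R)%:E.

Definition halg (R : realType) (V : nat -> set A) : \bar R :=
  if `[< fin_dim >] then 0%E else limn_esup (halg_term R V).

End Filtrations.

(* Main.v *)
Require Import Defs.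
From mathcomp Require Import all_boot all_order all_algebra.
From mathcomp Require Import all_classical all_reals all_analysis.
From mathcomp Require Import lra.
Set Implicit Arguments. Unset Strict Implicit. Unset Printing Implicit Defensive.
Import Order.TTheory GRing.Theory Num.Theory.
Local Open Scope classical_set_scope.
Local Open Scope ring_scope.

Section An.
Variable R : realType.

Lemma limn_esup_inf (u : nat -> \bar R) :
  limn_esup u = ereal_inf (range (esups u)).
Proof. by rewrite limn_esup_lim; apply: cvg_lim => //; exact: cvg_esups_inf. Qed.

Lemma esup_gt (u : nat -> \bar R) (t : R) :
  (t%:E < limn_esup u)%E <->
  exists t' : R, t < t' /\ forall N, exists n, (N <= n)%N /\ (t'%:E < u n)%E.
Proof.
rewrite limn_esup_inf; split.
- set L := ereal_inf _ => tL.
  have [t' [tt' t'L]] : exists t' : R, t < t' /\ (t'%:E < L)%E.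
    move: tL; case: L => [s| |] //=.
    + rewrite lte_fin => ts; exists ((t + s) / 2); split; [|rewrite lte_fin]; lra.
    + by move=> _; exists (t + 1); split; [lra|rewrite ltry].
  exists t'; split => // N.
  have : (t'%:E < esups u N)%E.
    apply: (lt_le_trans t'L); apply: ereal_inf_lbound; exists N => //.
  move=> /ereal_sup_gt [_ [n /= Nn <-] ltn].
  by exists n.
- move=> [t' [tt' H]].
  apply: (@lt_le_trans _ _ t'%:E); first by rewrite lte_fin.
  apply: le_ereal_inf_tmp => _ [N _ <-].
  have [n [Nn ltn]] := H N.
  apply: (le_trans (ltW ltn)); apply: ereal_sup_ubound; exists n => //.
Qed.

Lemma ereal_le_by (a b : \bar R) :
  (forall t : R, (t%:E < a)%E -> (t%:E < b)%E) -> (a <= b)%E.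
Proof.
move=> H; rewrite leNgt; apply/negP => ba.
move: ba H; case: a => [r| |]; case: b => [s| |] //=.
- rewrite lte_fin => sr H.
  have := H ((s + r) / 2); rewrite !lte_fin; lra.
- move=> _ H; have := H (r - 1); rewrite !lte_fin; move=> /(_ ltac:(lra)) //.
- move=> _ H; have := H (s + 1); rewrite !lte_fin ltry; move=> /(_ erefl); lra.
- by move=> _ H; have := H 0; rewrite ltry; move=> /(_ erefl).
Qed.

Lemma sum_ge (a : nat -> nat) p l q : (p <= l < q)%N ->
  (a l <= \sum_(p <= i < q) a i)%N.
Proof.
move=> /andP[pl lq]; rewrite (@big_cat_nat _ _ _ l) /= ?(ltnW lq) // [X in (_ + X)%N]big_ltn //=.
by rewrite addnCA leq_addr.
Qed.

Lemma pigeon (a : nat -> nat) p k : (0 < k)%N ->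
  exists j, (p <= j < p + k)%N /\ (\sum_(p <= i < p + k) a i <= k * a j)%N.
Proof.
elim: k => [//|k IH] _.
case: (posnP k) => [->|kpos].
  exists p; rewrite addn1 big_nat1 mul1n leqnn ltnSn leqnn; split => //.
have [j [/andP[pj jk] Hj]] := IH kpos.
rewrite addnS big_nat_recr /=; last by rewrite leq_addr.
case: (leqP (a j) (a (p + k))) => hj.
- exists (p + k); rewrite leq_addr ltnSn; split => //.
  rewrite mulSn addnC leq_add2l; apply: (leq_trans Hj); by rewrite leq_mul2l hj orbT.
- exists j; rewrite pj (ltn_trans jk) ?ltnSn //; split => //.
  by rewrite mulSn addnC; apply: leq_add => //; apply: ltnW.
Qed.

Definition term (d n : nat) : \bar R :=
  if d == 0%N then (-oo)%E else ((ln (d%:R : R)) / n%:R)%:E.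

Lemma term_gt (d n : nat) (t : R) : (t%:E < term d n)%E ->
  (0 < d)%N /\ t < ln (d%:R : R) / n%:R.
Proof.
by rewrite /term; case: eqP => [//|/eqP]; rewrite lte_fin -lt0n.
Qed.

Lemma term_ge0 (d n : nat) : (0 < d)%N -> (0%:E <= term d n)%E.
Proof.
move=> d0; rewrite /term; move: (d0); rewrite lt0n => /negbTE ->.
by rewrite lee_fin divr_ge0 // ln_ge0 // ler1n.
Qed.

Lemma lnD_le (D k a : nat) : (0 < D)%N -> (D <= k * a)%N ->
  ln (D%:R : R) <= ln (k%:R : R) + ln (a%:R : R).
Proof.
move=> D0 Dka.
have ka0 : (0 < k * a)%N by apply: leq_trans Dka.
have k0 : (0 < k)%N by move: ka0; rewrite muln_gt0 => /andP[].
have a0 : (0 < a)%N by move: ka0; rewrite muln_gt0 => /andP[].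
rewrite -lnM ?posrE ?ltr0n // -natrM ler_ln ?posrE ?ltr0n ?ler_nat //.
Qed.

Lemma ln_le_nat (x y : nat) : (0 < x)%N -> (x <= y)%N -> ln (x%:R : R) <= ln (y%:R : R).
Proof.
move=> x0 xy; rewrite ler_ln ?posrE ?ltr0n ?ler_nat //; exact: leq_trans xy.
Qed.

Lemma analytic (a : nat -> nat) (k : nat) (u v : nat -> \bar R) :
  (0 < k)%N -> (forall N, exists m, (N <= m)%N /\ (0 < a m)%N) ->
  (forall m, (0 < m)%N -> u m = term (a m.-1) m) ->
  (forall n, (0 < n)%N -> v n = term (\sum_(n.-1 * k <= l < n * k) a l) n) ->
  limn_esup v = (k%:R%:E * limn_esup u)%E.
Proof.
move=> k0 freq hu hv.
have kR : (0 < k%:R :> R) by rewrite ltr0n.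
have ktE t : ((t%:E < k%:R%:E * limn_esup u) <-> ((t / k%:R)%:E < limn_esup u))%E.
  by rewrite -lte_pdivrMl // -EFinM [_ * t]mulrC.
apply/le_anti/andP; split; apply: ereal_le_by => t.
- move=> /esup_gt [t' [tt' Hv]]; apply/ktE/esup_gt.
  case: (ltP t 0) => t0.
  + have tk : t / k%:R < 0 by rewrite pmulr_llt0 // invr_gt0.
    exists (t / k%:R / 2); split; first lra.
    move=> N; have [m [Nm am]] := freq N; exists m.+1; split; first by rewrite leqW.
    rewrite hu //=; apply: (lt_le_trans _ (term_ge0 _ am)); rewrite lte_fin; lra.
  + have t'0 : 0 < t' by lra.
    set M0 := (Num.truncn (2 * ln (k%:R : R) / (t' - t))).+1.
    exists ((t + t') / 2 / k%:R); split.
      by rewrite ltr_pM2r ?invr_gt0 //; lra.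
    move=> N; have [n [Nn ltn]] := Hv (maxn N (maxn M0 1)).
    move: Nn; rewrite !geq_max => /and3P[nN nM0 n1].
    move: ltn; rewrite hv // => /term_gt [D0 lnD].
    have eD : (n * k = n.-1 * k + k)%N by rewrite -{1}(prednK n1) mulSn addnC.
    move: D0 lnD; rewrite eD => D0 lnD.
    have [j [/andP[jl ju] Dj]] := pigeon a (n.-1 * k) k0.
    have aj : (0 < a j)%N.
      by move: (leq_trans D0 Dj); rewrite muln_gt0 => /andP[].
    exists j.+1; split.
      apply: (leq_trans nN); rewrite -(prednK n1) ltnS.
      exact: leq_trans (leq_pmulr _ k0) jl.
    rewrite hu //= /term; move: (aj); rewrite lt0n => /negbTE ->; rewrite lte_fin.
    set D := \sum_(_ <= _ < _) _ in D0 lnD Dj.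
    have F1 := lnD_le D0 Dj.
    have F2 : t' * n%:R < ln (D%:R : R) by rewrite -ltr_pdivlMr // ltr0n.
    have F3 : 2 * ln (k%:R : R) / (t' - t) < n%:R.
      by apply: lt_le_trans (truncnS_gt _) _; rewrite ler_nat.
    have F3' : 2 * ln (k%:R : R) < n%:R * (t' - t) by rewrite -ltr_pdivrMr // subr_gt0.
    have F4 : (j.+1)%:R <= n%:R * k%:R :> R by rewrite -natrM ler_nat eD.
    have G : (t + t') / 2 * n%:R < ln ((a j)%:R : R) by nra.
    rewrite ltr_pdivlMr ?ltr0n //; apply: le_lt_trans G.
    rewrite mulrAC ler_pdivrMr // -[_ * n%:R * _]mulrA; apply: ler_wpM2l; [lra|exact: F4].
- move=> /ktE /esup_gt [s' [ss' Hu]]; apply/esup_gt.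
  have sumpos : forall m, (0 < a m)%N -> exists n, (0 < n)%N /\ (m %/ k < n)%N /\ (n.-1 * k <= m)%N /\
      (0 < \sum_(n.-1 * k <= l < n * k) a l)%N /\
      (a m <= \sum_(n.-1 * k <= l < n * k) a l)%N.
    move=> m am; exists (m %/ k).+1; rewrite ltnSn /=.
    have H : (a m <= \sum_((m %/ k) * k <= l < (m %/ k).+1 * k) a l)%N.
      apply: sum_ge; rewrite leq_trunc_div /=; exact: ltn_ceil.
    by split => //; split => //; split; [exact: leq_trunc_div|split => //]; apply: leq_trans H.
  case: (ltP t 0) => t0.
  + exists (t / 2); split; first lra.
    move=> N; have [m [Nm am]] := freq (N * k).
    have [n [n1 [mn [_ [D0 _]]]]] := sumpos m am.
    exists n; split.
      apply: leq_trans (ltnW mn); by rewrite leq_divRL.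
    rewrite hv //; apply: (lt_le_trans _ (term_ge0 _ D0)); rewrite lte_fin; lra.
  + have tk : 0 <= t / k%:R by rewrite divr_ge0 // ler0n.
    have s'0 : 0 < s' by lra.
    have ks't : t < k%:R * s' by rewrite mulrC -ltr_pdivrMr.
    set M1 := (Num.truncn (2 * s' * k%:R / (k%:R * s' - t))).+1.
    exists ((t + k%:R * s') / 2); split; first lra.
    move=> N; have [m [Nm um]] := Hu ((maxn N M1 * k).+1).
    have m0 : (0 < m)%N by apply: leq_trans Nm.
    move: um; rewrite hu // => /term_gt [al lnal].
    have [n [n1 [mn [nm [D0 aD]]]]] := sumpos _ al.
    have mxn : (maxn N M1 < n)%N.
      apply: leq_ltn_trans mn; rewrite leq_divRL // -ltnS prednK //.
    move: mxn; rewrite gtn_max => /andP[Nn M1n].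
    exists n; split; first exact: ltnW.
    rewrite hv // /term; move: (D0); rewrite lt0n => /negbTE ->; rewrite lte_fin.
    set D := \sum_(_ <= _ < _) _ in D0 aD.
    have F1 := ln_le_nat al aD.
    have F2 : s' * m%:R < ln ((a m.-1)%:R : R) by rewrite -ltr_pdivlMr // ltr0n.
    have F3 : 2 * s' * k%:R / (k%:R * s' - t) < n%:R.
      by apply: lt_le_trans (truncnS_gt _) (_ : _ <= n%:R); rewrite ler_nat ltnW.
    have F3' : 2 * s' * k%:R < n%:R * (k%:R * s' - t) by rewrite -ltr_pdivrMr // subr_gt0.
    have F4 : n%:R * k%:R + 1 <= m%:R + k%:R :> R.
      rewrite -natrM -natrD natr1 ler_nat -{1}(prednK n1) mulSn addnC -{1}(prednK m0) addSn ltnS.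
      by rewrite leq_add2r.
    have G : 0 <= s' * (m%:R + k%:R - n%:R * k%:R - 1) by apply: mulr_ge0; lra.
    rewrite ltr_pdivlMr ?ltr0n //; nra.
Qed.
End An.

Lemma split_l d e (i : 'I_d) : fintype.split (lshift e i) = inl i.
Proof. exact: (@unsplitK _ _ (inl i)). Qed.
Lemma split_r d e (j : 'I_e) : fintype.split (rshift d j) = inr j.
Proof. exact: (@unsplitK _ _ (inr j)). Qed.

Section Alg.
Variables (K : fieldType) (A : algType K).

Lemma sub_sum (S : set A) d (c : 'I_d -> K) (b : 'I_d -> A) :
  is_subspace S -> (forall i, S (b i)) -> S (\sum_(i < d) c i *: b i).
Proof.
move=> [S0 [SD SZ]] Sb; elim/big_ind: _ => //; auto.
Qed.

Lemma sub_sub (S : set A) x y : is_subspace S -> S x -> S y -> S (x - y).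
Proof.
move=> [S0 [SD SZ]] Sx Sy; apply: SD => //; rewrite -scaleN1r; exact: SZ.
Qed.

Lemma steinitz (W : set A) d e (b : 'I_d -> A) (c : 'I_e -> A) :
  is_subspace W ->
  (forall i, exists (x : 'I_d -> K) w, W w /\ c i = \sum_(j < d) x j *: b j + w) ->
  (forall x : 'I_e -> K, W (\sum_(i < e) x i *: c i) -> forall i, x i = 0) ->
  (e <= d)%N.
Proof.
move=> Wsub span indep.
have : forall i, exists p : ('I_d -> K) * A, W p.2 /\ c i = \sum_(j < d) p.1 j *: b j + p.2.
  by move=> i; have [x [w [Ww ->]]] := span i; exists (x, w).
move=> /choice [f Hf].
rewrite leqNgt; apply/negP => de.
pose M : 'M[K]_(e, d) := \matrix_(i, j) (f i).1 j.
have kM : kermx M != 0.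
  rewrite -mxrank_eq0 mxrank_ker -lt0n subn_gt0.
  exact: leq_ltn_trans (rank_leq_col M) de.
have [i0 ri] : exists i, row i (kermx M) != 0.
  apply/existsP; apply: contraR kM => /existsPn H.
  apply/eqP/row_matrixP => i; rewrite row0; exact/eqP/negPn/H.
pose x := row i0 (kermx M).
have xM : x *m M = 0 by rewrite /x -row_mul mulmx_ker row0.
have Wx : W (\sum_(l < e) x 0 l *: c l).
  have -> : \sum_(l < e) x 0 l *: c l = \sum_(l < e) x 0 l *: (f l).2.
    under eq_bigr => l _ do rewrite (proj2 (Hf l)).
    under eq_bigr => l _ do rewrite scalerDr.
    under eq_bigr => l _ do rewrite scaler_sumr.

    rewrite big_split /= exchange_big /=.
    rewrite big1 ?add0r // => j _.
    rewrite (eq_bigr (fun l => (x 0 l * (f l).1 j) *: b j)); last by move=> l _; rewrite scalerA.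
    rewrite -scaler_suml.
    have -> : \sum_(l < e) x 0 l * (f l).1 j = (x *m M) 0 j.
      rewrite mxE; apply: eq_bigr; move=> l _; by rewrite !mxE.
    by rewrite xM mxE scale0r.
  apply: sub_sum => // l; exact: (proj1 (Hf l)).
move: ri; apply/negP/negPn/eqP; apply/rowP => l.
have := indep _ Wx l; rewrite /x !mxE => ->; by rewrite ?mxE.
Qed.


Lemma qb_le (V W : set A) d e (b : 'I_d -> A) (c : 'I_e -> A) :
  is_subspace W -> quot_basis V W b -> quot_basis V W c -> (e <= d)%N.
Proof.
move=> Ws [bV [bsp bind]] [cV [csp cind]].
apply: (@steinitz W d e b c Ws) => // i; exact: bsp (cV i).
Qed.

Lemma qdim_eq (V W : set A) d (b : 'I_d -> A) :
  is_subspace W -> quot_basis V W b -> qdim V W = d.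
Proof.
move=> Ws qb; rewrite /qdim.
have : [set d | exists b, @quot_basis _ _ V W d b] (xget 0%N [set d | exists b, @quot_basis _ _ V W d b]).
  by apply: xgetPex; exists d, b.
move=> [c qc]; apply/eqP; rewrite eqn_leq; apply/andP; split.
- exact: (qb_le Ws qb qc).
- exact: (qb_le Ws qc qb).
Qed.

Definition cat_fam d e (b : 'I_d -> A) (c : 'I_e -> A) (l : 'I_(d + e)) : A :=
  match fintype.split l with inl i => b i | inr j => c j end.
Definition cat_coef d e (x : 'I_d -> K) (y : 'I_e -> K) (l : 'I_(d + e)) : K :=
  match fintype.split l with inl i => x i | inr j => y j end.

Lemma sum_cat d e (z : 'I_(d + e) -> K) (b : 'I_d -> A) (c : 'I_e -> A) :
  \sum_(l < d + e) z l *: cat_fam b c l =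
  \sum_(i < d) z (lshift e i) *: b i + \sum_(j < e) z (rshift d j) *: c j.
Proof.
rewrite big_split_ord /=; congr (_ + _); apply: eq_bigr => i _;
  by rewrite /cat_fam ?split_l ?split_r.
Qed.

Lemma sum_cat2 d e (x : 'I_d -> K) (y : 'I_e -> K) (b : 'I_d -> A) (c : 'I_e -> A) :
  \sum_(l < d + e) cat_coef x y l *: cat_fam b c l =
  \sum_(i < d) x i *: b i + \sum_(j < e) y j *: c j.
Proof.
rewrite sum_cat; congr (_ + _); apply: eq_bigr => i _;
  by rewrite /cat_coef ?split_l ?split_r.
Qed.

Lemma concat (V U W : set A) d e (b : 'I_d -> A) (c : 'I_e -> A) :
  is_subspace W -> is_subspace U -> W `<=` U -> U `<=` V ->
  quot_basis U W b -> quot_basis V U c -> quot_basis V W (cat_fam b c).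
Proof.
move=> Ws Us WU UV [bU [bsp bind]] [cV [csp cind]]; split; [|split].
- by move=> l; rewrite /cat_fam; case: (fintype.split l) => [i|j]; [apply: UV|].
- move=> x Vx; have [y [u [Uu ->]]] := csp x Vx.
  have [z [w [Ww ->]]] := bsp u Uu.
  exists (cat_coef z y), w; split => //.
  rewrite sum_cat2.
  by rewrite addrA [X in _ = X + _]addrC.
- move=> z; rewrite sum_cat => Wz.
  have Pu : U (\sum_(i < d) z (lshift e i) *: b i) by apply: sub_sum.
  have Qu : U (\sum_(j < e) z (rshift d j) *: c j).
    by have := sub_sub Us (WU _ Wz) Pu; rewrite addrC addKr.
  have zr := cind _ Qu.
  have zl : forall i, z (lshift e i) = 0.
    have Q0 : \sum_(j < e) z (rshift d j) *: c j = 0.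
      by rewrite big1 // => j _; rewrite zr scale0r.
    by apply: bind; move: Wz; rewrite Q0 addr0.
  by move=> l; rewrite -(splitK l); case: (fintype.split l) => [i|j] /=.
Qed.


Lemma filt_mono (V : nat -> set A) : filtration V ->
  forall i j, (i <= j)%N -> V i `<=` V j.
Proof.
move=> [_ [_ [Vinc _]]] i j /subnK <-; elim: (j - i)%N => [|m IH] //=.
by rewrite addSn; apply: subset_trans IH (Vinc _).
Qed.

Lemma chain (V : nat -> set A) i m : filtration V ->
  exists d (b : 'I_d -> A), quot_basis (V (i + m)%N) (V i) b /\
    d = (\sum_(i <= l < i + m) qdim (V l.+1) (V l))%N.
Proof.
move=> filt; have [V0 [Vs [Vinc [_ [_ Vfq]]]]] := filt.
elim: m => [|m [d [b [qb hd]]]].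
- exists 0%N, (fun _ => 0); rewrite addn0 big_geq //; split => //.
  split; first by case.
  split; first by move=> x Vx; exists (fun _ => 0), x; split => //; rewrite big_ord0 add0r.
  by move=> c _; case.
- have [e [c qc]] := Vfq (i + m).+1 isT.
  exists (d + e)%N, (cat_fam b c); rewrite addnS; split.
  + apply: concat qb qc => //; apply: (filt_mono filt); exact: leq_addr.
  + rewrite big_nat_recr /= ?leq_addr // -hd; congr (_ + _)%N.
    by rewrite (qdim_eq (Vs _) qc).
Qed.

Lemma qdim_chain (V : nat -> set A) i j : filtration V -> (i <= j)%N ->
  qdim (V j) (V i) = (\sum_(i <= l < j) qdim (V l.+1) (V l))%N.
Proof.
move=> filt /subnKC <-; have [d [b [qb <-]]] := chain i (j - i) filt.
apply: qdim_eq qb; exact: (proj1 (proj2 filt)).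
Qed.

End Alg.

Theorem proposition3p2 (K : fieldType) (A : algType K) (R : realType)
    (V : nat -> set A) (k : nat) :
  fin_gen A -> filtration V -> (1 <= k)%N ->
  halg R (fun n => V (n * k)%N) = ((k%:R : R)%:E * halg R V)%E.
Proof.
move=> _ filt k1.
rewrite /halg; case: asboolP => fd; first by rewrite mule0.
have [V0 [Vs [Vinc [Vcov [_ Vfq]]]]] := filt.
apply: (@analytic R (fun l => qdim (V l.+1) (V l))) => //.
- move=> N; apply: contrapT => H.
  have H0 : forall m, (N <= m)%N -> qdim (V m.+1) (V m) = 0%N.
    move=> m Nm; apply/eqP; rewrite -leqn0 leqNgt; apply/negP => pos.
    by apply: H; exists m.
  have sub : forall m, V (N + m)%N `<=` V N.
    elim => [|m IH]; first by rewrite addn0.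
    move=> x Vx.
    have [e [c qc]] := Vfq (N + m).+1 isT.
    have e0 : e = 0%N by rewrite -(qdim_eq (Vs _) qc) H0 // leq_addr.
    subst e; have [_ [sp _]] := qc.
    rewrite addnS in Vx; have [y [w [Ww ->]]] := sp x Vx.
    rewrite big_ord0 add0r; exact: IH.
  apply: fd; have [d [b [qb _]]] := chain 0 N filt.
  rewrite add0n in qb.
  exists d, b => x; have [n Vnx] := Vcov x.
  have VNx : V N x.
    case: (leqP n N) => nN; first exact: (filt_mono filt nN).
    by rewrite -(subnKC (ltnW nN)) in Vnx; exact: sub _ _ Vnx.
  have [_ [sp _]] := qb.
  have [y [w [Ww ->]]] := sp x VNx.
  by rewrite V0 in Ww; exists y; rewrite Ww addr0.
- by move=> m m0; rewrite /halg_term /term prednK.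
- move=> n n0; rewrite /halg_term /term -qdim_chain //.
  by rewrite leq_mul2r leq_pred orbT.
Qed.
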